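(* Let $\mathfrak g=\mathfrak k\oplus\mathfrak m$ be a Pauli-spanned Cartan decomposition and let $b_1,\dots,b_d\in\tilde{\mathfrak m}$, $d\ge2$, be pairwise commuting Pauli strings (spanning an Abelian subalgebra $\mathfrak b\subseteq\mathfrak m$), all lying in the same connected component of the frustration graph of $\mathfrak g$. Assume the basis has no associative structure, meaning that for no three distinct indices $p,q,s$ is $i\,b_pb_qb_s\in\mathfrak m$. Then for every $1\le r\le d$, $$|\tilde{\mathfrak k}^r_{1\dots r-1}|=|\tilde{\mathfrak k}^1_{2\dots d}|+(d-r)\,|\tilde{\mathfrak k}^{12}_{3\dots d}|.$$
   Context: Pauli strings on $n$ qubits are tensor products of $I,X,Y,Z$, not all identity; two Pauli strings either commute or anticommute. A Pauli-spanned Cartan decomposition is $\mathfrak g=\mathfrak k\oplus\mathfrak m\subseteq\mathfrak{su}(2^n)$ with $\mathfrak k=\mathrm{span}_{i\mathbb R}\tilde{\mathfrak k}$, $\mathfrak m=\mathrm{span}_{i\mathbb R}\tilde{\mathfrak m}$, $\mathfrak g=\mathrm{span}_{i\mathbb R}\tilde{\mathfrak g}$ with $\tilde{\mathfrak g}=\tilde{\mathfrak k}\sqcup\tilde{\mathfrak m}$ the set of all Pauli strings (up to phase) $\sigma$ with $i\sigma\in\mathfrak g$, and $[\mathfrak k,\mathfrak k]\subseteq\mathfrak k$, $[\mathfrak m,\mathfrak m]\subseteq\mathfrak k$, $[\mathfrak k,\mathfrak m]\subseteq\mathfrak m$. The frustration graph of $\mathfrak g$ has vertex set $\tilde{\mathfrak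 g}$, with edges between anticommuting pairs. For disjoint index lists, $\tilde{\mathfrak k}^{i_1i_2\dots}_{j_1j_2\dots}$ is the set of $k\in\tilde{\mathfrak k}$ anticommuting with every $b_{i_p}$ and commuting with every $b_{j_q}$ (no condition on other indices); e.g. $\tilde{\mathfrak k}^1_{2\dots d}$ anticommutes with $b_1$ and commutes with $b_2,\dots,b_d$, and $\tilde{\mathfrak k}^{12}_{3\dots d}$ anticommutes with $b_1,b_2$ and commutes with $b_3,\dots,b_d$. *)

(* Defs.v *)
From mathcomp Require Import all_boot.
Set Implicit Arguments. Unset Strict Implicit. Unset Printing Implicit Defensive.

(* A Pauli string on n qubits, up to phase: for each qubit a pair (x,z) of bits,
   (0,0)=I, (1,0)=X, (1,1)=Y, (0,1)=Z. *)
Definition pauli (n : nat) := {ffun 'I_n -> bool * bool}.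

Definition pauli_id (n : nat) : pauli n := [ffun _ => (false, false)].

Definition pmul (n : nat) (a b : pauli n) : pauli n :=
  [ffun i => (xorb (a i).1 (b i).1, xorb (a i).2 (b i).2)].

(* a and b anticommute iff the symplectic form is odd. *)
Definition anticomm (n : nat) (a b : pauli n) : bool :=
  odd (\sum_(i < n) (((a i).1 && (b i).2) (+) ((a i).2 && (b i).1) : nat)).

Definition commute_p (n : nat) (a b : pauli n) : bool := ~~ anticomm a b.

(* Pauli-spanned Cartan decomposition g = k (+) m, given by the sets of Pauli
   strings Kt = k~, Mt = m~ (g~ = Kt :|: Mt).  For spans of Pauli strings,
   [i s, i t] = 0 if s,t commute and is a nonzero real multiple of i (s t) if they
   anticommute, so the bracket conditions read as follows. *)
Definition cartan_pauli (n : nat) (Kt Mt : {set pauli n}) : Prop :=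
  [/\ [&& pauli_id n \notin Kt, pauli_id n \notin Mt & [disjoint Kt & Mt]],
      (* [k,k] <= k *)
      ({in Kt &, forall x y, anticomm x y -> pmul x y \in Kt}),
      (* [m,m] <= k *)
      ({in Mt &, forall x y, anticomm x y -> pmul x y \in Kt}) &
      (* [k,m] <= m *)
      ({in Kt & Mt, forall x y, anticomm x y -> pmul x y \in Mt})].

Definition frustration (n : nat) (Gt : {set pauli n}) : rel (pauli n) :=
  fun a b => [&& a \in Gt, b \in Gt & anticomm a b].

(* k~^{A}_{C}: elements of Kt anticommuting with all b_j (j in A) and commuting
   with all b_j (j in C); indices are 0-based naturals. *)
Definition ksub (n d : nat) (Kt : {set pauli n}) (b : 'I_d -> pauli n)
    (A C : pred nat) : {set pauli n} :=
  [set k in Kt | [forall j : 'I_d, (nat_of_ord j \in A) ==> anticomm k (b j)]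
              && [forall j : 'I_d, (nat_of_ord j \in C) ==> commute_p k (b j)]].

(* Main.v *)
Require Import Defs.
From mathcomp Require Import all_boot zify.
Set Implicit Arguments. Unset Strict Implicit. Unset Printing Implicit Defensive.

Ltac pbash := apply/ffunP; let i := fresh "i" in intro i; rewrite !ffunE /=;
  repeat (match goal with |- context [fst (?t i)] =>
     let u := fresh "u" in let v := fresh "v" in case: (t i) => u v end);
  repeat (match goal with x : bool |- _ => case: x end); reflexivity.

Section Pauli.
Variable n : nat.
Implicit Types a c e : pauli n.

Lemma pmulC a c : pmul a c = pmul c a. Proof. pbash. Qed.
Lemma pmulA a c e : pmul a (pmul c e) = pmul (pmul a c) e. Proof. pbash. Qed.
Lemma pmulaa a : pmul a a = pauli_id n. Proof. pbash. Qed.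
Lemma pmul1 a : pmul (pauli_id n) a = a. Proof. pbash. Qed.
Lemma pmulKl a c : pmul a (pmul a c) = c. Proof. pbash. Qed.

Lemma anticommE a c : anticomm a c =
  \big[addb/false]_(i < n) (((a i).1 && (c i).2) (+) ((a i).2 && (c i).1)).
Proof.
rewrite /anticomm (big_morph odd oddD (erefl (odd 0))).
by apply: eq_bigr => i _; rewrite oddb.
Qed.

Lemma anticommC a c : anticomm a c = anticomm c a.
Proof.
rewrite !anticommE; apply: eq_bigr => i _.
by case: (a i) => [[] []]; case: (c i) => [[] []].
Qed.

Lemma anticommaa a : anticomm a a = false.
Proof.
rewrite anticommE big1 // => i _.
by case: (a i) => [[] []].
Qed.

Lemma anticommMl a c e : anticomm (pmul a c) e = anticomm a e (+) anticomm c e.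
Proof.
rewrite !anticommE -big_split /=; apply: eq_bigr => i _; rewrite ffunE /=.
by case: (a i) => [[] []]; case: (c i) => [[] []]; case: (e i) => [[] []].
Qed.

Lemma anticommMr a c e : anticomm e (pmul a c) = anticomm e a (+) anticomm e c.
Proof. by rewrite anticommC anticommMl !(anticommC e). Qed.

End Pauli.

Lemma three (x p q s : nat) : p != q -> q != s -> p != s ->
  ((x==p)||(x==q)) (+) ((x==q)||(x==s)) = ((x==p)||(x==s)).
Proof.
move=> pq qs ps.
have qp := pq; rewrite eq_sym in qp. have sq := qs; rewrite eq_sym in sq.
have sp := ps; rewrite eq_sym in sp.
case: (eqVneq x p) => [->|xp]; rewrite ?eqxx ?(negbTE pq) ?(negbTE ps) //=.
case: (eqVneq x q) => [->|xq]; rewrite ?eqxx ?(negbTE qs) ?(negbTE qp) //=.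

Qed.
Lemma two (x u v : nat) : u != v -> (x==u) (+) ((x==u)||(x==v)) = (x==v).
Proof.
move=> uv; case: (eqVneq x u) => [->|xu]; rewrite ?eqxx ?(negbTE uv) //=.
Qed.

Section Main.
Variables (n d : nat) (Kt Mt : {set pauli n}) (b : 'I_d -> pauli n).
Hypothesis HC : cartan_pauli Kt Mt.
Hypothesis Hbm : forall j, b j \in Mt.
Hypothesis Hcomm : forall i j, commute_p (b i) (b j).
Hypothesis Hna : forall p q s : 'I_d, p != q -> q != s -> p != s ->
     pmul (pmul (b p) (b q)) (b s) \notin Mt.

Definition sg k (j : 'I_d) := anticomm k (b j).

Lemma bb i j : anticomm (b i) (b j) = false.
Proof. exact: negbTE (Hcomm i j). Qed.

Lemma sgM x y j : sg (pmul x y) j = sg x j (+) sg y j.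
Proof. exact: anticommMl. Qed.

Lemma sgb i j : sg (b i) j = false.
Proof. exact: bb. Qed.

Lemma HKK x y : x \in Kt -> y \in Kt -> anticomm x y -> pmul x y \in Kt.
Proof. by case: HC => _ H _ _; apply: H. Qed.
Lemma HMM x y : x \in Mt -> y \in Mt -> anticomm x y -> pmul x y \in Kt.
Proof. by case: HC => _ _ H _; apply: H. Qed.
Lemma HKM x y : x \in Kt -> y \in Mt -> anticomm x y -> pmul x y \in Mt.
Proof. by case: HC => _ _ _ H; apply: H. Qed.

Lemma F0 k i j l : k \in Kt -> i != j -> j != l -> i != l ->
  sg k i -> sg k j -> sg k l -> False.
Proof.
move=> kK ij jl il hi hj hl.
have m1 : pmul k (b i) \in Mt by apply: HKM.
have k2 : pmul (pmul k (b i)) (b j) \in Kt.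
  by apply: HMM => //; rewrite anticommMl bb; move: hj; rewrite /sg => ->.
have m3 : pmul (pmul (pmul k (b i)) (b j)) (b l) \in Mt.
  by apply: HKM => //; rewrite !anticommMl !bb; move: hl; rewrite /sg => ->.
have m4 : pmul k (pmul (pmul (pmul k (b i)) (b j)) (b l)) \in Mt.
  apply: HKM => //; rewrite !anticommMr anticommaa.
  by move: hi hj hl; rewrite /sg => -> -> ->.
have E : pmul k (pmul (pmul (pmul k (b i)) (b j)) (b l)) =
         pmul (pmul (b i) (b j)) (b l) by pbash.
by move: m4; rewrite E; apply/negP; apply: Hna.
Qed.

Definition A (p : nat) :=
  [set k in Kt | [forall j : 'I_d, sg k j == (j == p :> nat)]].
Definition B (p q : nat) :=
  [set k in Kt | [forall j : 'I_d, sg k j == ((j == p :> nat) || (j == q :> nat))]].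

Definition Phi (h : pauli n) (u v : 'I_d) k :=
  if anticomm k h then pmul h k else pmul (pmul h (pmul k (b u))) (b v).

Lemma Phi_sg h u v k j : sg (Phi h u v k) j = sg k j (+) sg h j.
Proof.
rewrite /Phi; case: ifP => _; rewrite !sgM ?sgb.
  by rewrite addbC.
by rewrite !addbF addbC.
Qed.

Lemma Phi_K h u v k : h \in Kt -> sg h u -> sg h v -> k \in Kt -> sg k u ->
  ~~ sg k v -> Phi h u v k \in Kt.
Proof.
move=> hK hu hv kK ku kv; rewrite /Phi; case: ifP => hk.
  by apply: HKK => //; rewrite anticommC.
have m1 : pmul k (b u) \in Mt by apply: HKM.
have m2 : pmul h (pmul k (b u)) \in Mt.
  apply: HKM => //; rewrite anticommMr (anticommC h k) hk.
  by move: hu; rewrite /sg => ->.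
apply: HMM => //; rewrite !anticommMl bb.
move: hv kv; rewrite /sg => -> /negbTE ->; done.
Qed.

Lemma Phi_inv h u v k : sg h u -> sg h v -> Phi h u v (Phi h u v k) = k.
Proof.
move=> hu hv; rewrite /Phi; case hk: (anticomm k h).
  by rewrite anticommMl anticommaa hk /= pmulKl.
rewrite !anticommMl anticommaa hk (anticommC (b u)) (anticommC (b v)).
move: (hu) (hv); rewrite /sg => -> -> /=.
pbash.
Qed.

Lemma Phi_le h u v (P Q : {set pauli n}) : sg h u -> sg h v ->
  (forall k, k \in P -> Phi h u v k \in Q) -> #|P| <= #|Q|.
Proof.
move=> hu hv H.
rewrite -(card_imset P (can_inj (fun k => @Phi_inv h u v k hu hv))).
apply: subset_leq_card; apply/subsetP => x /imsetP [k kP ->]; exact: H.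
Qed.


Lemma A_le (u v : 'I_d) h : (u : nat) != v -> h \in B u v -> #|A u| <= #|A v|.
Proof.
move=> uv; rewrite inE => /andP [hK /forallP hB].
have hu : sg h u by rewrite (eqP (hB u)) eqxx.
have hv : sg h v by rewrite (eqP (hB v)) eqxx orbT.
apply: (Phi_le hu hv) => k; rewrite !inE => /andP [kK /forallP kA].
apply/andP; split.
  apply: Phi_K => //; first by rewrite (eqP (kA u)) eqxx.
  by rewrite (eqP (kA v)) eq_sym.
apply/forallP => j; rewrite Phi_sg (eqP (kA j)) (eqP (hB j)).
by rewrite two.
Qed.

Lemma B_le (p q s : 'I_d) h : (p : nat) != q -> (q : nat) != s -> (p : nat) != s ->
  h \in B q s -> #|B p q| <= #|B p s|.
Proof.
move=> pq qs ps; rewrite inE => /andP [hK /forallP hB].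
have hu : sg h q by rewrite (eqP (hB q)) eqxx.
have hv : sg h s by rewrite (eqP (hB s)) eqxx orbT.
apply: (Phi_le hu hv) => k; rewrite !inE => /andP [kK /forallP kA].
apply/andP; split.
  apply: Phi_K => //; first by rewrite (eqP (kA q)) eqxx orbT.
  by rewrite (eqP (kA s)) (eq_sym (s : nat)) (negbTE ps) eq_sym (negbTE qs).
apply/forallP => j; rewrite Phi_sg (eqP (kA j)) (eqP (hB j)).
by rewrite three.
Qed.

Lemma B_sym p q : B p q = B q p.
Proof.
apply/setP => k; rewrite !inE; congr (_ && _); apply: eq_forallb => j.
by rewrite orbC.
Qed.

Definition E (i j : 'I_d) : Prop := i = j \/ exists k, k \in B i j.

Lemma E_sym i j : E i j -> E j i.
Proof. by case=> [->|[k hk]]; [left | right; exists k; rewrite B_sym]. Qed.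

Lemma E_trans i j l : E i j -> E j l -> E i l.
Proof.
case=> [->//|[k hk]]; case=> [<-|[k1 hk1]]; first by right; exists k.
case: (eqVneq i l) => [->|il]; first by left.
case: (eqVneq i j) => [ij|ij].
  by right; exists k1; rewrite ij.
case: (eqVneq j l) => [jl|jl]; first by right; exists k; rewrite -jl.
have : 0 < #|B i l|.
  apply: leq_trans (B_le ij jl il hk1).
  by apply/card_gt0P; exists k.
by move/card_gt0P => [x hx]; right; exists x.
Qed.

Lemma F1 x i j : x \in Kt :|: Mt -> sg x i -> sg x j -> E i j.
Proof.
move=> xg hi hj; case: (eqVneq i j) => [->|ij]; first by left.
have [y [yK hy]] : exists y, y \in Kt /\ forall l, sg y l = sg x l.
  move: xg; rewrite inE => /orP [xK|xM]; first by exists x.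
  exists (pmul x (b i)); split; first by apply: HMM.
  by move=> l; rewrite sgM sgb addbF.
right; exists y; rewrite inE yK /=; apply/forallP => l.
case: (eqVneq l i) => [->|li]; first by rewrite hy hi eqxx.
case: (eqVneq l j) => [->|lj]; first by rewrite hy hj eqxx orbT.
rewrite (negbTE (li : (l:nat) != i)) (negbTE (lj : (l:nat) != j)) /=; apply/eqP/negP => hl.
apply: (F0 yK ij _ _ _ _ hl); rewrite ?hy //.
  by rewrite eq_sym.
by rewrite eq_sym.
Qed.

Lemma gM x y : x \in Kt :|: Mt -> y \in Kt :|: Mt -> anticomm x y ->
  pmul x y \in Kt :|: Mt.
Proof.
rewrite !inE => /orP [xK|xM] /orP [yK|yM] hxy.
- by rewrite HKK.
- by rewrite HKM ?orbT.
- by rewrite pmulC HKM ?orbT // anticommC.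
- by rewrite HMM.
Qed.

Definition inX (p : 'I_d) x := x \in Kt :|: Mt /\ exists i, sg x i /\ E p i.
Definition inW (p : 'I_d) v :=
  v \in Kt :|: Mt /\ exists x, inX p x /\ (v = x \/ anticomm v x).

Lemma W_closed p v w : inW p v -> frustration (Kt :|: Mt) v w -> inW p w.
Proof.
move=> [vg [x [[xg [i [xi Epi]]] hvx]]] /and3P [_ wg vw].
split => //.
case: hvx => [ex|vx].
  by exists x; split; [split => //; exists i | right; rewrite anticommC -ex].
case hwx: (anticomm w x).
  by exists x; split; [split => //; exists i | right].
case hvi: (sg v i).
  by exists v; split; [split => //; exists i | right; rewrite anticommC].
exists (pmul x v); split.
  split; first by apply: gM; rewrite // anticommC.
  by exists i; rewrite sgM xi hvi.
by right; rewrite anticommMr hwx anticommC.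
Qed.

Lemma path_W p x s : inW p x -> path (frustration (Kt :|: Mt)) x s ->
  inW p (last x s).
Proof.
elim: s x => //= y s IH x hx /andP [hxy hp].
by apply: IH => //; apply: W_closed hxy.
Qed.

Hypothesis Hinj : injective b.
Hypothesis Hconn : forall i j, connect (frustration (Kt :|: Mt)) (b i) (b j).

Lemma conn_E p q : E p q.
Proof.
case: (eqVneq p q) => [->|pq]; first by left.
move: (Hconn p q) => /connectP [s hp hl].
have hW : inW p (b p).
  case: s hp hl => [_ /= /Hinj qp|y s /= /andP [hy _] _].
    by move: pq; rewrite qp eqxx.
  move: hy => /and3P [bg yg hby].
  split => //; exists y; split; last by right.
  by split => //; exists p; split; [rewrite /sg anticommC | left].
have := path_W hW hp; rewrite -hl.
move=> [_ [x [[xg [i [xi Epi]]] hvx]]].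
case: hvx => [ex|bx].
  by move: xi; rewrite -ex sgb.
apply: E_trans Epi (F1 xg xi _).
by rewrite /sg anticommC.
Qed.

Lemma Bne (p q : 'I_d) : p != q -> exists k, k \in B p q.
Proof. by move=> pq; case: (conn_E p q) => // e; move: pq; rewrite e eqxx. Qed.

Lemma A_eq (u v : 'I_d) : #|A u| = #|A v|.
Proof.
case: (eqVneq u v) => [->//|uv].
have [k hk] := Bne uv.
have vu : v != u by rewrite eq_sym.
have [k' hk'] := Bne vu.
by apply/anti_leq; rewrite (A_le uv hk) (A_le vu hk').
Qed.

Lemma B_eq3 (p q s : 'I_d) : p != q -> q != s -> p != s -> #|B p q| = #|B p s|.
Proof.
move=> pq qs ps.
have [k hk] := Bne qs.
have sq : s != q by rewrite eq_sym.
have [k' hk'] := Bne sq.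
by apply/anti_leq; rewrite (B_le pq qs ps hk) (B_le ps sq pq hk').
Qed.

End Main.

Section P.
Variables (n d : nat) (Kt Mt : {set pauli n}) (b : 'I_d -> pauli n).
Hypothesis HC : cartan_pauli Kt Mt.
Hypothesis Hbm : forall j, b j \in Mt.
Hypothesis Hcomm : forall i j, commute_p (b i) (b j).
Hypothesis Hna : forall p q s : 'I_d, p != q -> q != s -> p != s ->
     pmul (pmul (b p) (b q)) (b s) \notin Mt.

Lemma forall_false (P : pred 'I_d) j : ~~ P j -> [forall j, P j] = false.
Proof. by move=> h; apply/negbTE/forallPn; exists j. Qed.

Lemma pointwise (r : 'I_d) k :
 (k \in ksub Kt b (pred1 (nat_of_ord r)) (fun j => j < r) : nat) =
 (k \in A Kt b r) + \sum_(s < d | r < s) (k \in B Kt b r s).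
Proof.
rewrite /ksub /A /B !inE.
case kK: (k \in Kt) => /=; last by rewrite big1 // => s _; rewrite inE kK.
under eq_bigr => s _ do rewrite inE kK /=.
have -> : [forall j : 'I_d, (nat_of_ord j \in pred1 (nat_of_ord r)) ==> anticomm k (b j)] = sg b k r.
  apply/forallP/idP => [/(_ r)|h j]; first by rewrite inE eqxx.
  by rewrite inE; apply/implyP => /eqP jr; have -> : j = r by apply/val_inj.
have -> : [forall j : 'I_d, (nat_of_ord j \in (fun j0 : nat => j0 < r)) ==> commute_p k (b j)] =
   [forall j : 'I_d, (j < r) ==> ~~ sg b k j] by apply: eq_forallb => j.
case hr: (sg b k r) => /=; last first.
  rewrite (@forall_false _ r) /=; last by rewrite hr eqxx.
  by rewrite big1 // => s _; rewrite (@forall_false _ r) //= eqxx hr.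
case: (pickP [pred s : 'I_d | (s != r) && sg b k s]) => [s /andP [sr ks] | none].
  have hc : forall j : 'I_d, sg b k j = (j == r :> nat) || (j == s :> nat).
    move=> j; case: (eqVneq j r) => [->|jr]; first by rewrite hr eqxx.
    case: (eqVneq j s) => [->|js]; first by rewrite ks eqxx orbT.
    rewrite (negbTE (jr : (j:nat) != r)) (negbTE (js : (j:nat) != s)).
    apply/negP => kj; apply: (F0 HC Hbm Hcomm Hna kK sr _ _ ks hr kj).
      by rewrite eq_sym.
    by rewrite eq_sym.
  rewrite (@forall_false (fun j : 'I_d => sg b k j == (j == r :> nat)) s) /=; last first.
    by rewrite hc eqxx orbT (negbTE (sr : (s:nat) != r)).
  have sr' : (s : nat) != r := sr.
  case: (ltngtP r s) => [rs|sr2|e]; last by move: sr'; rewrite e eqxx.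
  - have -> : [forall j : 'I_d, (j < r) ==> ~~ sg b k j].
      apply/forallP => j; apply/implyP => jr; rewrite hc.
      have -> : (j == r :> nat) = false by apply/negbTE; lia.
      have -> : (j == s :> nat) = false by apply/negbTE; lia.
      done.
    rewrite (bigD1 s) //= big1 ?addn0; last first.
      move=> t /andP [rt ts]; rewrite (@forall_false _ t) //= hc.
      rewrite eqxx orbT (negbTE (ts : (t:nat) != s)).
      by have -> : (t == r :> nat) = false by apply/negbTE; lia.
    have -> // : [forall j, sg b k j == (j == r :> nat) || (j == s :> nat)].
    by apply/forallP => j; rewrite hc.
  - rewrite (@forall_false (fun j : 'I_d => (j < r) ==> ~~ sg b k j) s) /=; last by rewrite sr2 hc eqxx orbT.
    rewrite big1 // => t rt; rewrite (@forall_false _ t) //= hc.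
    have -> : (t == s :> nat) = false by apply/negbTE; lia.
    have -> : (t == r :> nat) = false by apply/negbTE; lia.
    by rewrite eqxx orbT.
have hc : forall j : 'I_d, sg b k j = (j == r :> nat).
  move=> j; case: (eqVneq j r) => [->|jr]; first by rewrite hr eqxx.
  move: (none j) => /=; rewrite jr /= => ->.
  by rewrite (negbTE (jr : (j:nat) != r)).
have -> : [forall j : 'I_d, (j < r) ==> ~~ sg b k j].
  by apply/forallP => j; apply/implyP => jr; rewrite hc; apply/negP => /eqP; lia.
have -> : [forall j : 'I_d, sg b k j == (j == r :> nat)] by apply/forallP => j; rewrite hc.
rewrite big1 // => t rt; rewrite (@forall_false _ t) //= hc eqxx orbT.
by have -> : (t == r :> nat) = false by apply/negbTE; lia.
Qed.

Lemma card_sum (X : {set pauli n}) : #|X| = \sum_k (k \in X : nat).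
Proof.
by rewrite -sum1_card big_mkcond /=; apply: eq_bigr => k _; case: (k \in X).
Qed.

Lemma sum_const_gt (r : 'I_d) c : \sum_(s < d | r < s) c = (d - r.+1) * c.
Proof.
rewrite -sum_nat_const_nat big_geq_mkord; apply: eq_bigl => s; by [].
Qed.

Hypothesis Hd : 2 <= d.
Hypothesis Hinj : injective b.
Hypothesis Hconn : forall i j, connect (frustration (Kt :|: Mt)) (b i) (b j).

Lemma mainC (r : 'I_d) :
    #|ksub Kt b (pred1 (nat_of_ord r)) (fun j => j < r)| =
    #|ksub Kt b (pred1 0) (fun j => 1 <= j)|
    + (d - r.+1) * #|ksub Kt b (fun j => j < 2) (fun j => 2 <= j)|.
Proof.
have h0 : 0 < d by lia.
have h1 : 1 < d by lia.
pose o0 := Ordinal h0. pose o1 := Ordinal h1.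
have eA : ksub Kt b (pred1 0) (fun j => 1 <= j) = A Kt b 0.
  apply/setP => k; rewrite /ksub /A !inE; congr (_ && _).
  apply/andP/forallP => [[/forallP H1 /forallP H2] j | H].
    case: (eqVneq (j : nat) 0) => [e|ne].
      by move: (H1 j); rewrite inE e eqxx /= /sg => ->.
    move: (H2 j).
    have -> : (nat_of_ord j \in (fun j0 : nat => 1 <= j0)) by rewrite unfold_in /=; lia.
    by rewrite /sg; move=> /= /negbTE ->.
  split; apply/forallP => j; apply/implyP.
    by rewrite inE => e; move: (H j); rewrite e => /eqP.
  rewrite unfold_in /= => hj; move: (H j) => /eqP hj'.
  change (~~ sg b k j); rewrite hj'; apply/negP => /eqP; lia.
have eB : ksub Kt b (fun j => j < 2) (fun j => 2 <= j) = B Kt b 0 1.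
  apply/setP => k; rewrite /ksub /B !inE; congr (_ && _).
  apply/andP/forallP => [[/forallP H1 /forallP H2] j | H].
    have [lt2|ge2] := ltnP j 2.
      move: (H1 j); rewrite unfold_in /= lt2 /= => hh.
      rewrite /sg hh; apply/eqP; symmetry; apply/orP; lia.
    move: (H2 j); rewrite unfold_in /= ge2 /= => /negbTE hh.
    rewrite /sg hh; apply/eqP; symmetry; apply/negbTE/negP => /orP; lia.
  split; apply/forallP => j; apply/implyP; rewrite unfold_in /= => hj;
    move: (H j) => /eqP hj'.
    by change (sg b k j); rewrite hj'; apply/orP; lia.
  by change (~~ sg b k j); rewrite hj'; apply/negP => /orP; lia.
rewrite eA eB card_sum.
under eq_bigr => k _ do rewrite pointwise.
rewrite big_split /= -card_sum exchange_big /=.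
under eq_bigr => s _ do rewrite -card_sum.
have -> : #|A Kt b r| = #|A Kt b 0|.
  exact: (A_eq HC Hbm Hcomm Hna Hinj Hconn r o0).
rewrite -sum_const_gt; congr (_ + _); apply: eq_bigr => s rs.
have Bq := B_eq3 HC Hbm Hcomm Hna Hinj Hconn.
case: (eqVneq (r : nat) 0) => [r0|r0].
  rewrite r0.
  case: (eqVneq (s : nat) 1) => [s1|s1]; first by rewrite s1.
  have ne : forall i j : 'I_d, (i : nat) != j -> i != j by [].
  symmetry; apply: (Bq o0 o1 s); apply: ne => /=; lia.
have ne : forall i j : 'I_d, (i : nat) != j -> i != j by [].
rewrite B_sym (Bq s r o0); try (apply: ne => /=; lia).
rewrite B_sym /= (Bq o0 s o1) //=; apply: ne => /=; lia.
Qed.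
End P.

Theorem theoremC3 (n d : nat) (Kt Mt : {set pauli n}) (b : 'I_d -> pauli n) :
  cartan_pauli Kt Mt ->
  2 <= d ->
  injective b ->
  (forall j, b j \in Mt) ->
  (forall i j, commute_p (b i) (b j)) ->
  (forall i j, connect (frustration (Kt :|: Mt)) (b i) (b j)) ->
  (forall p q s : 'I_d, p != q -> q != s -> p != s ->
     pmul (pmul (b p) (b q)) (b s) \notin Mt) ->
  forall r : 'I_d,
    #|ksub Kt b (pred1 (nat_of_ord r)) (fun j => j < r)| =
    #|ksub Kt b (pred1 0) (fun j => 1 <= j)|
    + (d - r.+1) * #|ksub Kt b (fun j => j < 2) (fun j => 2 <= j)|.
Proof.
move=> HC Hd Hinj Hbm Hcomm Hconn Hna r.
exact: (mainC HC Hbm Hcomm Hna Hd Hinj Hconn r).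
Qed.
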